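(* Every chain complex $\mathcal{A}$ over $\mathbb{F}_2$ has a lift to some chain complex $\tilde{\mathcal{A}}$ over $\mathbb{Z}$. Further, the lift can be chosen so that $\tilde{\mathcal{A}}$ has no torsion in its homology or cohomology and has the same Betti numbers as $\mathcal{A}$, i.e. $H_j(\tilde{\mathcal{A}})$ and $H^j(\tilde{\mathcal{A}})$ are both isomorphic to $\mathbb{Z}^{b_j(\mathcal{A})}$, where $b_j(\mathcal{A})$ are the $\mathbb{F}_2$ Betti numbers of $\mathcal{A}$.
   Context: A chain complex $\mathcal{A}$ over $\mathbb{F}_2$ consists of finite-dimensional vector spaces $\mathcal{A}_j$ with preferred bases and boundary maps $\partial_j:\mathcal{A}_j\to\mathcal{A}_{j-1}$ (matrices with entries in $\{0,1\}$) with $\partial_{j}\partial_{j+1}=0$. A lift is a chain complex over $\mathbb{Z}$ on free modules with the same bases, given by integer matrices $\tilde\partial_j$ of the same sizes with each entry congruent mod $2$ to the corresponding entry of $\partial_j$, satisfying $\tilde\partial_j\tilde\partial_{j+1}=0$ over $\mathbb{Z}$. *)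

(* Defs.v *)
From HB Require Import structures.
From mathcomp Require Import all_boot all_order all_algebra.
Set Implicit Arguments. Unset Strict Implicit. Unset Printing Implicit Defensive.
Import Order.TTheory GRing.Theory Num.Theory.
Local Open Scope ring_scope.

(* A chain complex over a ring R (with preferred bases) is
   indexed by j : int, with A_j = R^(n j) (column vectors) and the boundary
   map  A_(j+1) -> A_j  given by the matrix  d j : 'M_(n j, n (j+1)),
   acting on column vectors x |-> d j *m x.  So "d j" is the paper's
   \partial_{j+1}. *)

Definition chain_complex (R : pzRingType) (n : int -> nat)
  (d : forall j : int, 'M[R]_(n j, n (j + 1))) : Prop :=
  forall j : int, d j *m d (j + 1) = 0.

Definition mod2_mx (p q : nat) (M : 'M[int]_(p, q)) : 'M['F_2]_(p, q) :=
  map_mx (fun z : int => z%:~R) M.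

Definition is_lift (n : int -> nat)
  (d : forall j : int, 'M['F_2]_(n j, n (j + 1)))
  (D : forall j : int, 'M[int]_(n j, n (j + 1))) : Prop :=
  (forall j : int, mod2_mx (D j) = d j) /\ chain_complex D.

(* For integer matrices A : Z^q -> Z^p and B : Z^r -> Z^q (acting on
   column vectors), the quotient group  ker A / im B  is isomorphic to Z^b:
   there is a group homomorphism phi from ker A onto Z^b whose kernel is
   exactly im B (first isomorphism theorem). *)
Definition quot_iso_Zpow (p q r : nat) (A : 'M[int]_(p, q)) (B : 'M[int]_(q, r))
  (b : nat) : Prop :=
  exists phi : 'cV[int]_q -> 'cV[int]_b,
    [/\ forall x y : 'cV[int]_q, A *m x = 0 -> A *m y = 0 ->
          phi (x + y) = phi x + phi y,
        forall x : 'cV[int]_q, A *m x = 0 ->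
          (phi x = 0 <-> exists y : 'cV[int]_r, x = B *m y)
      & forall z : 'cV[int]_b, exists x : 'cV[int]_q, A *m x = 0 /\ phi x = z].

(* Homology of an integer complex in degree j+1 (paper's indexing):
   H_(j+1) = ker \partial_(j+1) / im \partial_(j+2) = ker (D j) / im (D (j+1)). *)
Definition homology_iso_Zpow (n : int -> nat)
  (D : forall j : int, 'M[int]_(n j, n (j + 1))) (j : int) (b : nat) : Prop :=
  quot_iso_Zpow (D j) (D (j + 1)) b.

(* Cohomology in degree j+1: coboundaries are the transposes,
   H^(j+1) = ker (\partial_(j+2))^T / im (\partial_(j+1))^T
           = ker (D (j+1))^T / im (D j)^T. *)
Definition cohomology_iso_Zpow (n : int -> nat)
  (D : forall j : int, 'M[int]_(n j, n (j + 1))) (j : int) (b : nat) : Prop :=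
  quot_iso_Zpow (D (j + 1))^T (D j)^T b.

(* F_2 Betti number in degree j+1: dim ker \partial_(j+1) - dim im \partial_(j+2).
   The kernel {x | d j *m x = 0} of the column action is the row space of
   kermx (d j)^T. *)
Definition betti2 (n : int -> nat)
  (d : forall j : int, 'M['F_2]_(n j, n (j + 1))) (j : int) : nat :=
  let rk_out := \rank (kermx (d j)^T) in
  let rk_in := \rank (d (j + 1)) in (rk_out - rk_in)%N.

(* Main.v *)
Require Import Defs.
From HB Require Import structures.
From mathcomp Require Import all_boot all_order all_algebra.
From mathcomp Require Import zify.
From Stdlib Require Import IndefiniteDescription.
Import Order.TTheory GRing.Theory Num.Theory.
Local Open Scope ring_scope.

Module Aux.
Set Implicit Arguments. Unset Strict Implicit. Unset Printing Implicit Defensive.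

Definition pickrow (F : pzRingType) k n (A : 'M[F]_(k, n)) (t : nat) : 'rV[F]_n :=
  oapp (fun l => row l A) 0 (insub t).

Lemma pickrowE (F : pzRingType) k n (A : 'M[F]_(k, n)) (l : 'I_k) (t : nat) :
  t = nat_of_ord l -> pickrow A t = row l A.
Proof. by move=> ->; rewrite /pickrow; change (nat_of_ord l) with (val l); rewrite valK. Qed.

Lemma adapted (F : fieldType) m n p (E : 'M[F]_(m, n)) (G : 'M[F]_(n, p)) :
  E *m G = 0 ->
  exists R : 'M[F]_n, [/\ R \in unitmx,
    forall (i : 'I_n) (i' : 'I_(\rank E)), nat_of_ord i = nat_of_ord i' -> row i R = row i' (row_base E),
    forall i : 'I_n, (i < n - \rank G)%N -> row i R *m G = 0 &
    forall (i : 'I_n) (i' : 'I_(\rank G)), nat_of_ord i = (n - \rank G + i')%N ->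
       row i R *m G = row i' (row_base G)].
Proof.
move=> EG.
set K := kermx G.
have EK : (E <= K)%MS by apply/sub_kermxP.
set Hm := row_base (K :\: E)%MS.
set Wm := row_base G *m pinvmx G.
have WG : Wm *m G = row_base G by rewrite /Wm mulmxKpV // eq_row_base.
have r2n : (\rank G <= n)%N by apply: rank_leq_row.
have hdim : (\rank E + \rank (K :\: E)%MS = n - \rank G)%N.
  have := mxrank_cap_compl K E.
  have -> : \rank (K :&: E)%MS = \rank E by have /capmx_idPr e := EK; rewrite e.
  by rewrite mxrank_ker.
pose R := \matrix_(i < n) (if (i < \rank E)%N then pickrow (row_base E) i
            else if (i < \rank E + \rank (K :\: E)%MS)%N then pickrow Hm (i - \rank E)
            else pickrow Wm (i - (\rank E + \rank (K :\: E)%MS))).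
have Rfirst : forall (i : 'I_n) (i' : 'I_(\rank E)), nat_of_ord i = nat_of_ord i' -> row i R = row i' (row_base E).
  move=> i i' eii'; rewrite rowK eii' ltn_ord; exact: pickrowE.
have Rmid : forall (i : 'I_n) (i' : 'I_(\rank (K :\: E)%MS)), nat_of_ord i = (\rank E + i')%N -> row i R = row i' Hm.
  move=> i i' eii'; have := ltn_ord i'; have := ltn_ord i; rewrite rowK eii' => ? ?; rewrite ifN; last by lia.
  rewrite ifT; last by rewrite ltn_add2l.
  by apply: pickrowE; lia.
have Rlast : forall (i : 'I_n) (i' : 'I_(\rank G)), nat_of_ord i = (n - \rank G + i')%N -> row i R = row i' Wm.
  move=> i i' eii'; have := ltn_ord i'; have := ltn_ord i; rewrite rowK eii' => ? ?; rewrite ifN; last by lia.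
  rewrite ifN; last by lia.
  by apply: pickrowE; lia.
exists R; split => //.
- have rEn : (\rank E + \rank (K :\: E)%MS + \rank G = n)%N by lia.
  have ER : (row_base E <= R)%MS.
    apply/row_subP => i'.
    have lt : (nat_of_ord i' < n)%N by have := ltn_ord i'; lia.
    by rewrite -(Rfirst (Ordinal lt) i') // row_sub.
  have HR : (Hm <= R)%MS.
    apply/row_subP => i'.
    have lt : (\rank E + i' < n)%N by have := ltn_ord i'; lia.
    by rewrite -(Rmid (Ordinal lt) i') // row_sub.
  have WR : (Wm <= R)%MS.
    apply/row_subP => i'.
    have lt : (n - \rank G + i' < n)%N by have := ltn_ord i'; lia.
    by rewrite -(Rlast (Ordinal lt) i') // row_sub.
  have KR : (K <= R)%MS.
    rewrite -(addsmx_diff_cap_eq K E) addsmx_sub; apply/andP; split.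
      by apply: submx_trans HR; rewrite /Hm eq_row_base.
    apply: submx_trans ER; rewrite eq_row_base; exact: capmxSr.
  have cap0 : (K :&: Wm)%MS = 0.
    have /submxP [X eX] : ((K :&: Wm)%MS <= Wm)%MS by exact: capmxSr.
    have : (K :&: Wm)%MS *m G = 0 by apply/sub_kermxP; exact: capmxSl.
    rewrite eX -mulmxA WG => XG.
    have : X *m row_base G = 0 *m row_base G by rewrite mul0mx.
    by move/(row_free_inj (row_base_free G)) => ->; rewrite mul0mx.
  have rW : \rank Wm = \rank G.
    apply/eqP; rewrite eqn_leq rank_leq_row /=.
    have := mxrankM_maxl Wm G; rewrite WG.
    by have := eq_row_base G => e; rewrite e.
  have rKW : \rank (K + Wm)%MS = n.
    have := mxrank_sum_cap K Wm; rewrite cap0 mxrank0 rW mxrank_ker; lia.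
  rewrite -row_full_unit /row_full eqn_leq rank_leq_col /=.
  by rewrite -{1}rKW mxrankS // addsmx_sub KR WR.
- move=> i ilt.
  case: (ltnP i (\rank E)) => ir1.
  + rewrite (Rfirst i (Ordinal ir1)) // -row_mul.
    have /sub_kermxP -> : (row_base E <= K)%MS by rewrite eq_row_base.
    by rewrite row0.
  + have ih : (i - \rank E < \rank (K :\: E)%MS)%N by lia.
    rewrite (Rmid i (Ordinal ih)) /=; last by lia.
    rewrite -row_mul.
    have /sub_kermxP -> : (Hm <= K)%MS by rewrite eq_row_base diffmxSl.
    by rewrite row0.
- move=> i i' eii'; by rewrite (Rlast i i') // -row_mul WG.
Qed.

Lemma F2lift (x : 'F_2) : ((nat_of_ord x)%:Z)%:~R = x.
Proof. by case: x => [[|[|k]] Hk] //=; apply/val_inj. Qed.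

Lemma F2_neq0 (x : 'F_2) : x != 0 -> x = 1.
Proof. by case: x => [[|[|k]] Hk] //= _; apply/val_inj. Qed.

Definition lift2 p q (M : 'M['F_2]_(p, q)) : 'M[int]_(p, q) :=
  map_mx (fun x : 'F_2 => (nat_of_ord x)%:Z) M.

Lemma mod2_lift p q (M : 'M['F_2]_(p, q)) : mod2_mx (lift2 M) = M.
Proof. by apply/matrixP => i j; rewrite !mxE F2lift. Qed.

Lemma mod2M m n p (A : 'M[int]_(m, n)) (B : 'M[int]_(n, p)) :
  mod2_mx (A *m B) = mod2_mx A *m mod2_mx B.
Proof. by rewrite /mod2_mx map_mxM. Qed.

Lemma mod2_inv n (Q : 'M[int]_n) : Q \in unitmx -> mod2_mx Q *m mod2_mx (invmx Q) = 1%:M.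
Proof. by move=> Qu; rewrite -mod2M mulmxV // /mod2_mx map_mx1. Qed.

Lemma lift_GL n (A : 'M['F_2]_n) : A \in unitmx ->
  exists Q : 'M[int]_n, Q \in unitmx /\ mod2_mx Q = A.
Proof.
case: n A => [|n] A Au.
  by exists 1%:M; split; [exact: unitmx1 | apply/matrixP => [[]]].
have := cormen_lup_correct A; have := cormen_lup_perm A; have := cormen_lup_detL A.
have Ll := cormen_lup_lower A; have Uu := cormen_lup_upper A.
case: (cormen_lup A) Ll Uu => [[P L] U] /= Ll Uu detL /existsP [s /eqP eP] PA.
subst P.
have Ui : forall i, U i i = 1.
  move=> i; apply: F2_neq0.
  have : \det U != 0.
    have := congr1 determinant PA; rewrite !detM detL mul1r => <-.
    rewrite mulf_neq0 //.
      by rewrite -unitfE -unitmxE unitmx_perm.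
    by rewrite -unitfE -unitmxE.
  rewrite -det_tr det_trig; last by apply/is_trig_mxP => a b ab; rewrite mxE Uu.
  rewrite prodf_seq_neq0 => /allP /(_ i); rewrite mxE; apply; exact: mem_index_enum.
have dL : \det (lift2 L) = 1.
  rewrite det_trig; last by apply/is_trig_mxP => a b ab; rewrite !mxE Ll ?(ltnW ab) //; have -> : (a == b) = false by apply/eqP => e; rewrite e ltnn in ab.
  by rewrite big1 // => i _; rewrite !mxE Ll // eqxx.
have dU : \det (lift2 U) = 1.
  rewrite -det_tr det_trig; last by apply/is_trig_mxP => a b ab; rewrite !mxE Uu.
  by rewrite big1 // => i _; rewrite !mxE Ui.
exists (invmx (perm_mx s) *m lift2 L *m lift2 U); split.
  by rewrite !unitmx_mul unitmx_inv unitmx_perm /= !unitmxE dL dU unitr1.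
have PA' : perm_mx s *m A = L *m U by exact: PA.
have mP : mod2_mx (perm_mx s) = perm_mx s by rewrite /mod2_mx map_perm_mx.
rewrite !mod2M !mod2_lift -mulmxA -PA' mulmxA -mP -mod2M mulVmx ?unitmx_perm //.
by rewrite /mod2_mx map_mx1 mul1mx.
Qed.

Definition cnat (R : pzRingType) n (u : 'cV[R]_n) (t : nat) : R :=
  oapp (fun k => u k 0) 0 (insub t).

Lemma cnatE (R : pzRingType) n (u : 'cV[R]_n) (k : 'I_n) t :
  t = nat_of_ord k -> cnat u t = u k 0.
Proof. by move=> ->; rewrite /cnat; change (nat_of_ord k) with (val k); rewrite valK. Qed.

Lemma cnat_out (R : pzRingType) n (u : 'cV[R]_n) t : (n <= t)%N -> cnat u t = 0.
Proof. by move=> nt; rewrite /cnat insubN // -leqNgt. Qed.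

Lemma sum_pick (R : pzRingType) n (u : 'cV[R]_n) t :
  \sum_(k < n) (nat_of_ord k == t)%:R * u k 0 = cnat u t.
Proof.
case: (ltnP t n) => tn.
  rewrite (bigD1 (Ordinal tn)) //= eqxx mul1r big1 ?addr0; first by rewrite (cnatE u (k:=Ordinal tn)).
  move=> k kne; have -> : (nat_of_ord k == t) = false; last by rewrite mul0r.
  by apply/negbTE; apply: contra kne => /eqP e; apply/eqP/val_inj.
rewrite cnat_out // big1 // => k _.
have -> : (nat_of_ord k == t) = false; last by rewrite mul0r.
by apply/negbTE; have := ltn_ord k; lia.
Qed.

Definition NZ (R : pzRingType) m n r : 'M[R]_(m, n) :=
  \matrix_(i, k) (((nat_of_ord i < r)%N && (nat_of_ord k == n - r + i)%N)%:R).

Arguments NZ {R} m n r.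

Lemma NZ_mul (R : pzRingType) m n r (u : 'cV[R]_n) (i : 'I_m) :
  (NZ m n r *m u) i 0 = if (nat_of_ord i < r)%N then cnat u (n - r + i) else 0.
Proof.
rewrite mxE; case: ifP => ir.
  by rewrite -sum_pick; apply: eq_bigr => k _; rewrite mxE ir.
by rewrite big1 // => k _; rewrite mxE ir mul0r.
Qed.

Lemma NZtr_mul (R : pzRingType) m n r (u : 'cV[R]_m) (k : 'I_n) : (r <= n)%N ->
  ((NZ m n r)^T *m u) k 0 = if (n - r <= k)%N then cnat u (k - (n - r)) else 0.
Proof.
move=> rn; rewrite mxE; case: ifP => kr.
  rewrite -sum_pick; apply: eq_bigr => i _; rewrite !mxE.
  congr (_%:R * _); have := ltn_ord k; have := ltn_ord i.
  by case: (ltnP i r) => ir /=; move=> ? ?; apply/eqP/eqP; lia.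
rewrite big1 // => i _; rewrite !mxE.
have -> : ((nat_of_ord i < r)%N && (nat_of_ord k == n - r + i)%N) = false.
  by apply/negbTE/negP => /andP [? /eqP ?]; move/negbT: kr; lia.
by rewrite mul0r.
Qed.

Lemma cV_eq (R : Type) n (x y : 'cV[R]_n) : (forall k : 'I_n, x k 0 = y k 0) -> x = y.
Proof. by move=> H; apply/matrixP => i j; rewrite (ord1 j). Qed.

Section NZlemmas.
Variable R : pzRingType.
Variables (m n r : nat) (rm : (r <= m)%N) (rn : (r <= n)%N).

Lemma NZ_ker (u : 'cV[R]_n) :
  NZ m n r *m u = 0 <-> forall k : 'I_n, (n - r <= k)%N -> u k 0 = 0.
Proof.
split.
  move=> H k kr; have ir : (k - (n - r) < m)%N by have := ltn_ord k; lia.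
  have := congr1 (fun M : 'cV_m => M (Ordinal ir) 0) H; rewrite NZ_mul mxE /= ifT; last by have := ltn_ord k; lia.
  by rewrite (cnatE u (k := k)) //; lia.
move=> H; apply: cV_eq => i; rewrite NZ_mul mxE; case: ifP => // ir.
have lt : (n - r + i < n)%N by lia.
by rewrite (cnatE u (k := Ordinal lt)) // H //=; lia.
Qed.

Lemma NZ_im (x : 'cV[R]_m) :
  (exists v, x = NZ m n r *m v) <-> forall i : 'I_m, (r <= i)%N -> x i 0 = 0.
Proof.
split.
  by move=> [v ->] i ri; rewrite NZ_mul ifN //; lia.
move=> H; exists (\col_k (if (n - r <= nat_of_ord k)%N then cnat x (k - (n - r)) else 0)).
apply: cV_eq => i; rewrite NZ_mul; case: ifP => ir; last by apply: H; lia.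
have lt : (n - r + i < n)%N by lia.
rewrite (cnatE _ (k := Ordinal lt)) // mxE /= ifT; last by lia.
by symmetry; apply: cnatE; lia.
Qed.

Lemma NZtr_ker (u : 'cV[R]_m) :
  (NZ m n r)^T *m u = 0 <-> forall i : 'I_m, (i < r)%N -> u i 0 = 0.
Proof.
split.
  move=> H i ir; have lt : (n - r + i < n)%N by lia.
  have := congr1 (fun M : 'cV_n => M (Ordinal lt) 0) H; rewrite NZtr_mul // mxE /= ifT; last by lia.
  by rewrite (cnatE u (k := i)) //; lia.
move=> H; apply: cV_eq => k; rewrite NZtr_mul // mxE; case: ifP => // kr.
have lt : (k - (n - r) < m)%N by have := ltn_ord k; lia.
by rewrite (cnatE u (k := Ordinal lt)) // H //=; have := ltn_ord k; lia.
Qed.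

Lemma NZtr_im (x : 'cV[R]_n) :
  (exists v, x = (NZ m n r)^T *m v) <-> forall k : 'I_n, (k < n - r)%N -> x k 0 = 0.
Proof.
split.
  by move=> [v ->] k kr; rewrite NZtr_mul // ifN //; lia.
move=> H; exists (\col_i (if (nat_of_ord i < r)%N then cnat x (n - r + i) else 0)).
apply: cV_eq => k; rewrite NZtr_mul //; case: ifP => kr; last by apply: H; lia.
have lt : (k - (n - r) < m)%N by have := ltn_ord k; lia.
rewrite (cnatE _ (k := Ordinal lt)) // mxE /= ifT; last by have := ltn_ord k; lia.
by symmetry; apply: cnatE; have := ltn_ord k; lia.
Qed.

End NZlemmas.

Lemma quot_gen p q r b lo (A : 'M[int]_(p, q)) (B : 'M[int]_(q, r)) (S : 'M[int]_q)
  (Kr Ir : pred nat) :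
  S \in unitmx -> (lo + b <= q)%N ->
  (forall x : 'cV_q, A *m x = 0 <-> forall k : 'I_q, Kr k -> (S *m x) k 0 = 0) ->
  (forall x : 'cV_q, (exists y : 'cV_r, x = B *m y) <-> forall k : 'I_q, Ir k -> (S *m x) k 0 = 0) ->
  (forall k : nat, Ir k -> Kr k || ((lo <= k)%N && (k < lo + b)%N)) ->
  (forall k : nat, Kr k -> ~~ ((lo <= k)%N && (k < lo + b)%N)) ->
  (forall k : nat, ((lo <= k)%N && (k < lo + b)%N) -> Ir k) ->
  quot_iso_Zpow A B b.
Proof.
move=> Su lob hA hB c1 c2 c3.
pose Sel : 'M[int]_(b, q) := \matrix_(i, k) (nat_of_ord k == lo + i)%N%:R.
have SelE : forall (u : 'cV_q) (i : 'I_b), (Sel *m u) i 0 = cnat u (lo + i).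
  by move=> u i; rewrite mxE -sum_pick; apply: eq_bigr => k _; rewrite mxE.
exists (fun x => Sel *m (S *m x)); split.
- by move=> x y _ _; rewrite !mulmxDr.
- move=> x Ax; rewrite hB; split.
    move=> H k nIk; case/orP: (c1 _ nIk) => [Kk|mk]; first by move/hA: Ax; apply.
    have ib : (k - lo < b)%N by lia.
    have := congr1 (fun M : 'cV_b => M (Ordinal ib) 0) H; rewrite SelE mxE /=.
    by rewrite (cnatE _ (k := k)) //; lia.
  move=> H; apply: cV_eq => i; rewrite SelE mxE.
  have lt : (lo + i < q)%N by have := ltn_ord i; lia.
  rewrite (cnatE _ (k := Ordinal lt)) //; apply: H; apply: c3 => /=.
  by have := ltn_ord i; lia.
- move=> z.
  pose u : 'cV[int]_q := \col_k (if ((lo <= nat_of_ord k)%N && (nat_of_ord k < lo + b)%N)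
                                 then cnat z (k - lo) else 0).
  exists (invmx S *m u); rewrite mulKVmx //; split.
    apply/hA => k Kk; rewrite mulKVmx // mxE; move/negbTE: (c2 _ Kk) => -> //.
  apply: cV_eq => i; rewrite SelE.
  have lt : (lo + i < q)%N by have := ltn_ord i; lia.
  rewrite (cnatE _ (k := Ordinal lt)) // mxE /= ifT; last by have := ltn_ord i; lia.
  by apply: cnatE; lia.
Qed.

Definition Bprop (n : int -> nat) (d : forall j : int, 'M['F_2]_(n j, n (j + 1)%R)) k
  (R : 'M['F_2]_(n k)) : Prop :=
  forall (i : 'I_(n k)) (i' : 'I_(\rank (d k)^T)), nat_of_ord i = nat_of_ord i' ->
    row i R = row i' (row_base (d k)^T).

Definition CDprop (n : int -> nat) (d : forall j : int, 'M['F_2]_(n j, n (j + 1)%R)) (j : int)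
  (R : 'M['F_2]_(n (j + 1)%R)) : Prop :=
  (forall i : 'I_(n (j + 1)%R), (i < n (j + 1)%R - \rank (d j)^T)%N -> row i R *m (d j)^T = 0) /\
  (forall (i : 'I_(n (j + 1)%R)) (i' : 'I_(\rank (d j)^T)),
     nat_of_ord i = (n (j + 1)%R - \rank (d j)^T + i')%N ->
     row i R *m (d j)^T = row i' (row_base (d j)^T)).

Definition castn (n : int -> nat) (j k : int) (e : j + 1 = k) (R : 'M['F_2]_(n k)) : 'M['F_2]_(n (j + 1)%R) :=
  castmx (congr1 n (esym e), congr1 n (esym e)) R.

Lemma exR (n : int -> nat) (d : forall j : int, 'M['F_2]_(n j, n (j + 1)%R))
  (hd : chain_complex d) (k : int) :
  exists R : 'M['F_2]_(n k),
    [/\ R \in unitmx, Bprop d R & forall (j : int) (e : j + 1 = k), CDprop d (castn e R)].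
Proof.
have e0 : (k - 1) + 1 = k by rewrite subrK.
move: (k - 1) e0 => j0 e0; subst k.
have EG : (d (j0 + 1))^T *m (d j0)^T = 0 by rewrite -trmx_mul hd trmx0.
have [R [Ru RB RC RD]] := adapted EG.
exists R; split => //.
move=> j e; have ejj : j = j0 by apply: (addIr 1); rewrite e.
subst j; rewrite /castn castmx_id; split; assumption.
Qed.

Lemma exQ (n : int -> nat) (d : forall j : int, 'M['F_2]_(n j, n (j + 1)%R))
  (hd : chain_complex d) (k : int) :
  exists Q : 'M[int]_(n k),
    [/\ Q \in unitmx, Bprop d (mod2_mx Q)^T &
        forall (j : int) (e : j + 1 = k), CDprop d (castn e (mod2_mx Q)^T)].
Proof.
have [R [Ru RB RC]] := exR hd k.
have [Q [Qu eQ]] : exists Q : 'M[int]_(n k), Q \in unitmx /\ mod2_mx Q = R^T.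
  by apply: lift_GL; rewrite unitmx_tr.
by exists Q; rewrite eQ trmxK.
Qed.

Section Main.
Variables (n : int -> nat) (d : forall j : int, 'M['F_2]_(n j, n (j + 1)%R)).
Hypothesis hd : chain_complex d.

Definition Qf (k : int) : 'M[int]_(n k) := proj1_sig (constructive_indefinite_description _ (exQ hd k)).

Lemma QfP (k : int) : [/\ Qf k \in unitmx, Bprop d (mod2_mx (Qf k))^T &
        forall (j : int) (e : j + 1 = k), CDprop d (castn e (mod2_mx (Qf k))^T)].
Proof. exact: (proj2_sig (constructive_indefinite_description _ (exQ hd k))). Qed.

Lemma Qf_unit (k : int) : Qf k \in unitmx. Proof. by case: (QfP k). Qed.

Lemma rk_le (j : int) : (\rank (d (j + 1)%R) + \rank (d j) <= n (j + 1)%R)%N.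
Proof.
have : ((d (j + 1)%R)^T <= kermx (d j)^T)%MS by apply/sub_kermxP; rewrite -trmx_mul hd trmx0.
move/mxrankS; rewrite mxrank_ker !mxrank_tr.
have := rank_leq_col (d j); lia.
Qed.

Lemma rk_row (j : int) : (\rank (d j) <= n j)%N. Proof. exact: rank_leq_row. Qed.
Lemma rk_col (j : int) : (\rank (d j) <= n (j + 1)%R)%N. Proof. exact: rank_leq_col. Qed.

Definition NZj (j : int) : 'M[int]_(n j, n (j + 1)%R) := NZ (n j) (n (j + 1)%R) (\rank (d j)).

Definition Dm (j : int) : 'M[int]_(n j, n (j + 1)%R) := Qf j *m NZj j *m invmx (Qf (j + 1)).

Lemma NZNZ (j : int) : NZj j *m NZj (j + 1) = 0.
Proof.
apply/matrixP => a c; rewrite !mxE big1 // => k _; rewrite !mxE.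
case: andP => [[_ /eqP ek]|_]; last by rewrite mul0r.
case: andP => [[kr _]|_]; last by rewrite mulr0.
by have := rk_le j; lia.
Qed.

Lemma Dm_chain : chain_complex Dm.
Proof.
move=> j; rewrite /Dm !mulmxA mulmxKV ?Qf_unit //.
by rewrite -(mulmxA (Qf j)) NZNZ mulmx0 mul0mx.
Qed.

End Main.

Lemma mod2NZ m n r : mod2_mx (NZ m n r : 'M[int]_(m, n)) = NZ m n r.
Proof. by apply/matrixP => i k; rewrite !mxE; case: (_ && _). Qed.

Lemma unit_cancel m p (Q : 'M[int]_m) (y : 'M[int]_(m, p)) : Q \in unitmx ->
  (Q *m y = 0 <-> y = 0).
Proof.
move=> Qu; split; last by move->; rewrite mulmx0.
by move/(congr1 (mulmx (invmx Q))); rewrite mulKmx // mulmx0.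
Qed.

Section Main2.
Variables (n : int -> nat) (d : forall j : int, 'M['F_2]_(n j, n (j + 1)%R)).
Hypothesis hd : chain_complex d.

Lemma Dm_lift (j : int) : mod2_mx (Dm hd j) = d j.
Proof.
have key : d j *m mod2_mx (Qf hd (j + 1)) = mod2_mx (Qf hd j) *m NZ (n j) (n (j + 1)%R) (\rank (d j)).
  apply: trmx_inj; rewrite !trmx_mul.
  have [_ Bj _] := QfP hd j.
  have [_ _ CD] := QfP hd (j + 1).
  have [CD1 CD2] := CD j (erefl _).
  rewrite /castn castmx_id in CD1 CD2.
  move: Bj CD1 CD2.
  move: (mod2_mx (Qf hd j))^T (mod2_mx (Qf hd (j + 1)))^T => Rj Rj1 Bj CD1 CD2.
  apply/row_matrixP => k; rewrite row_mul.
  apply/rowP => c; rewrite [RHS]mxE.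
  have -> : ((NZ (n j) (n (j + 1)%R) (\rank (d j)))^T *m Rj) k c =
      ((NZ (n j) (n (j + 1)%R) (\rank (d j)))^T *m col c Rj) k 0 by rewrite !mxE; apply: eq_bigr => i _; rewrite !mxE.
  rewrite NZtr_mul ?rk_col //.
  case: ifP => kr.
    have lt : (k - (n (j + 1)%R - \rank (d j)) < \rank (d j)^T)%N.
      by rewrite mxrank_tr; have := ltn_ord k; have := rk_col d j; lia.
    rewrite (CD2 k (Ordinal lt)); last by rewrite /= mxrank_tr; lia.
    have lt2 : (k - (n (j + 1)%R - \rank (d j)) < n j)%N.
      by have := rk_row d j; have := ltn_ord k; have := rk_col d j; lia.
    rewrite (cnatE _ (k := Ordinal lt2)) // mxE.
    have := Bj (Ordinal lt2) (Ordinal lt) erefl => /(congr1 (fun v : 'rV_(n j) => v 0 c)).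
    by rewrite !mxE => ->.
  by rewrite CD1 ?mxE // mxrank_tr; lia.
by rewrite /Dm /NZj !mod2M mod2NZ -key -mulmxA mod2_inv ?Qf_unit // mulmx1.
Qed.

Lemma Dm_hom (j : int) : homology_iso_Zpow (Dm hd) j (betti2 d j).
Proof.
have eb : betti2 d j = (n (j + 1)%R - \rank (d j) - \rank (d (j + 1)%R))%N.
  by rewrite /betti2 /= mxrank_ker mxrank_tr.
rewrite /homology_iso_Zpow eb.
have rl := rk_le hd j.
apply: (quot_gen (S := invmx (Qf hd (j + 1))) (lo := \rank (d (j + 1)%R))
   (Kr := fun k => (n (j + 1)%R - \rank (d j) <= k)%N)
   (Ir := fun k => (\rank (d (j + 1)%R) <= k)%N)).
- by rewrite unitmx_inv Qf_unit.
- lia.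
- move=> x; rewrite /Dm -!mulmxA unit_cancel ?Qf_unit //.
  exact: NZ_ker (rk_row d j) (rk_col d j) _.
- move=> x; apply: (iff_trans _ (NZ_im (rk_row d (j + 1)) (rk_col d (j + 1)) _)).
  split.
    move=> [y ->]; exists (invmx (Qf hd (j + 1 + 1)) *m y).
    by rewrite /Dm !mulmxA mulVmx ?Qf_unit // mul1mx.
  move=> [v ev]; exists (Qf hd (j + 1 + 1) *m v).
  rewrite -(mulKVmx (Qf_unit hd (j + 1)) x) ev /Dm !mulmxA mulmxKV ?Qf_unit //.
- move=> k /= kr; apply/orP; case: (leqP (n (j + 1)%R - \rank (d j)) k) => h; [left | right] => //; lia.
- move=> k /= kr; apply/negP => /andP [? ?]; lia.
- move=> k /= /andP [? ?]; lia.
Qed.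

Lemma QT (k : int) : (Qf hd k)^T *m (invmx (Qf hd k))^T = 1%:M.
Proof. by rewrite -trmx_mul mulVmx ?Qf_unit // trmx1. Qed.
Lemma QT' (k : int) : (invmx (Qf hd k))^T *m (Qf hd k)^T = 1%:M.
Proof. by rewrite -trmx_mul mulmxV ?Qf_unit // trmx1. Qed.

Lemma Dm_cohom (j : int) : cohomology_iso_Zpow (Dm hd) j (betti2 d j).
Proof.
have eb : betti2 d j = (n (j + 1)%R - \rank (d j) - \rank (d (j + 1)%R))%N.
  by rewrite /betti2 /= mxrank_ker mxrank_tr.
rewrite /cohomology_iso_Zpow eb.
have rl := rk_le hd j.
apply: (quot_gen (S := (Qf hd (j + 1))^T) (lo := \rank (d (j + 1)%R))
   (Kr := fun k => (k < \rank (d (j + 1)%R))%N)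
   (Ir := fun k => (k < n (j + 1)%R - \rank (d j))%N)).
- by rewrite unitmx_tr Qf_unit.
- lia.
- move=> x; rewrite /Dm !trmx_mul -!mulmxA unit_cancel ?unitmx_tr ?unitmx_inv ?Qf_unit //.
  exact: NZtr_ker (rk_row d (j + 1)) (rk_col d (j + 1)) _.
- move=> x; apply: (iff_trans _ (NZtr_im (rk_row d j) (rk_col d j) _)).
  split.
    move=> [y ->]; exists ((Qf hd j)^T *m y).
    by rewrite /Dm !trmx_mul !mulmxA QT mul1mx /NZj.
  move=> [v ev]; exists ((invmx (Qf hd j))^T *m v).
  transitivity ((invmx (Qf hd (j + 1)))^T *m ((Qf hd (j + 1))^T *m x)).
    by rewrite mulmxA QT' mul1mx.
  rewrite ev /Dm !trmx_mul !mulmxA -(mulmxA _ (Qf hd j)^T) QT mulmx1 /NZj.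
  done.
- move=> k /= kr; apply/orP; case: (ltnP k (\rank (d (j + 1)%R))) => h; [left | right] => //; lia.
- move=> k /= kr; apply/negP => /andP [? ?]; lia.
- move=> k /= /andP [? ?]; lia.
Qed.

End Main2.

End Aux.
Import Aux.

Theorem mainTheorem8 (n : int -> nat)
  (d : forall j : int, 'M['F_2]_(n j, n (j + 1)))
  (hd : chain_complex d) :
  exists D : forall j : int, 'M[int]_(n j, n (j + 1)),
    [/\ is_lift d D,
        forall j : int, homology_iso_Zpow D j (betti2 d j)
      & forall j : int, cohomology_iso_Zpow D j (betti2 d j)].
Proof.
exists (Dm hd); split.
- by split; [exact: Dm_lift | exact: Dm_chain].
- exact: Dm_hom.
- exact: Dm_cohom.
Qed.
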